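(* Let $k\ge2$ be an integer and let $H_k$ be the graph with half-edges obtained from $K_{k,k}$ by deleting one vertex but keeping its $k$ incident edges as half-edges. Let $e\ne e'$ be two half-edges of $H_k$ with end vertices $x$ and $x'$ respectively. Then for every positive integer $n$, $H_k$ admits an $(n(k+1)+1,n)$-total colouring $\gamma$ such that $\gamma(e)=0$, $\gamma(e')=1$, $\gamma(x)=n+1$ and $\gamma(x')=nk+1$.
   Context: A half-edge has exactly one end vertex. For integers $p\ge q\ge1$, a $(p,q)$-total colouring of a graph (possibly with half-edges) is a map $c$ from the set of vertices, edges and half-edges to $\{0,1,\ldots,p-1\}$ such that $q\le|c(a)-c(b)|\le p-q$ whenever $a,b$ are two adjacent vertices, two edges/half-edges sharing an end vertex, or a vertex and an edge or half-edge incident with it. *)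

(* Defs.v *)
From mathcomp Require Import all_boot.
Set Implicit Arguments. Unset Strict Implicit. Unset Printing Implicit Defensive.

(* A (finite, multi)graph with half-edges: vertices, edges (each with two
   end vertices) and half-edges (each with exactly one end vertex). *)
Record hgraph := HGraph {
  hV : finType;
  hE : finType;
  hF : finType;
  eends : hE -> hV * hV;
  hend : hF -> hV }.

Definition einc (G : hgraph) (e : hE G) (v : hV G) : bool :=
  ((eends e).1 == v) || ((eends e).2 == v).

Definition distn (a b : nat) : nat := (a - b) + (b - a).

Definition pq_ok (p q a b : nat) : Prop := q <= distn a b <= p - q.

Definition pq_total_colouring (G : hgraph) (p q : nat)
  (cv : hV G -> nat) (ce : hE G -> nat) (ch : hF G -> nat) : Prop :=
  (forall v, cv v < p) /\ (forall e, ce e < p) /\ (forall h, ch h < p) /\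
  (forall e, pq_ok p q (cv (eends e).1) (cv (eends e).2)) /\
  (forall e v, einc e v -> pq_ok p q (cv v) (ce e)) /\
  (forall h, pq_ok p q (cv (hend h)) (ch h)) /\
  (forall e e' v, e != e' -> einc e v -> einc e' v -> pq_ok p q (ce e) (ce e')) /\
  (forall e h, einc e (hend h) -> pq_ok p q (ce e) (ch h)) /\
  (forall h h', h != h' -> hend h = hend h' -> pq_ok p q (ch h) (ch h')).

(* Vertices: inl a (a < k-1, remaining first side),
   inr b (b < k, second side).
   Half-edges: b < k, with end vertex inr b. *)
Definition Hk (k : nat) : hgraph :=
  @HGraph ('I_k.-1 + 'I_k)%type ('I_k.-1 * 'I_k)%type 'I_k
    (fun ab => (inl ab.1, inr ab.2)) (fun b => inr b).

(* Main.v *)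
Require Import Defs.
From mathcomp Require Import all_boot all_fingroup zify.
Lemma key n k c d u v : 0 < n -> c <= k -> d <= k -> c != d -> u <= 1 -> v <= 1 ->
  (c < d -> u <= v) -> (d < c -> v <= u) ->
  pq_ok (n * (k + 1) + 1) n (n * c + u) (n * d + v).
Proof.
move=> n0 ck dk cd u1 v1 h1 h2; rewrite /pq_ok /distn.
have [lt|lt] : c < d \/ d < c by lia.
- have uv := h1 lt.
  have e : n * d = n * c + n * (d - c) by rewrite -mulnDr; congr (_ * _); lia.
  have l1 : n <= n * (d - c) by rewrite -{1}(muln1 n) leq_mul2l; lia.
  have l2 : n * (d - c) <= n * k by rewrite leq_mul2l; lia.
  have e2 : n * (k + 1) = n * k + n by rewrite mulnDr muln1.
  rewrite e e2; lia.
- have uv := h2 lt.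
  have e : n * c = n * d + n * (c - d) by rewrite -mulnDr; congr (_ * _); lia.
  have l1 : n <= n * (c - d) by rewrite -{1}(muln1 n) leq_mul2l; lia.
  have l2 : n * (c - d) <= n * k by rewrite leq_mul2l; lia.
  have e2 : n * (k + 1) = n * k + n by rewrite mulnDr muln1.
  rewrite e e2; lia.
Qed.
Lemma key' n k a b c d u v : a = n * c + u -> b = n * d + v -> 0 < n -> c <= k -> d <= k -> c != d -> u <= 1 -> v <= 1 ->
  (c < d -> u <= v) -> (d < c -> v <= u) -> pq_ok (n * (k + 1) + 1) n a b.
Proof. by move=> -> ->; exact: key. Qed.
Lemma bnd n k a L u : 0 < n -> a = n * L + u -> L <= k -> u <= 1 -> a < n * (k + 1) + 1.
Proof.
move=> n0 -> Lk u1; have l2 : n * L <= n * k by rewrite leq_mul2l Lk orbT.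
have e2 : n * (k + 1) = n * k + n by rewrite mulnDr muln1.
rewrite e2; lia.
Qed.
Lemma key1 n k a b X Y : a = n * (1 + X) + 1 -> b = n * (1 + Y) + 1 -> 0 < n ->
  X < k -> Y < k -> X != Y -> pq_ok (n * (k + 1) + 1) n a b.
Proof.
move=> ha hb n0 xk yk xy; apply: (@key' n k a b (1 + X) (1 + Y) 1 1) => //; try lia.
Qed.
Lemma perm2 k (x x' y y' : 'I_k) : x != x' -> y != y' ->
  exists s : {perm 'I_k}, s x = y /\ s x' = y'.
Proof.
move=> hx hy.
pose t := tperm x' y'. pose u := tperm (t x) y.
exists (t * u)%g; rewrite !permM; split; first by rewrite tpermL.
have h : t x != t x' by rewrite (inj_eq perm_inj).
rewrite /t tpermL tpermD //.
  by move: h; rewrite /t tpermL.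
Qed.
Theorem lemma3 (k : nat) (hk : 2 <= k) (e e' : hF (Hk k)) (hee : e != e')
  (n : nat) (hn : 0 < n) :
  exists (cv : hV (Hk k) -> nat) (ce : hE (Hk k) -> nat) (ch : hF (Hk k) -> nat),
    [/\ pq_total_colouring (n * (k + 1) + 1) n cv ce ch,
        ch e = 0, ch e' = 1,
        cv (hend e) = n + 1
      & cv (hend e') = n * k + 1].
Proof.
have k0 : 0 < k by lia.
have k1 : 1 < k by lia.
have [s [sx sx']] := @perm2 k e e' (Ordinal k1) (Ordinal k0) hee isT.
pose pi := fun b : 'I_k => val (s b).
have piK : forall b, pi b < k by move=> b; exact: ltn_ord.
have piI : forall b b', pi b = pi b' -> b = b'.
  by move=> b b' h; apply: (perm_inj (s:=s)); apply: val_inj.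
exists (fun v : 'I_k.-1 + 'I_k => match v with inl _ => 1 | inr b => n * (1 + (k - 1 + pi b) %% k) + 1 end).
exists (fun ab : 'I_k.-1 * 'I_k => n * (1 + (ab.1 + pi ab.2) %% k) + 1).
exists (fun h : 'I_k => if h == e then 0 else 1).
have mk : forall m, (m %% k) < k by move=> m; rewrite ltn_mod.
split.
- split; [|split; [|split; [|split; [|split; [|split; [|split; [|split]]]]]]].
  + case=> [a|b]; first by apply: (@bnd n k _ (0) (1) hn) => //; rewrite muln0.
    by apply: (@bnd n k _ (1 + (k - 1 + pi b) %% k) (1) hn) => //; have := mk (k - 1 + pi b); lia.
  + case=> a b; by apply: (@bnd n k _ (1 + (a + pi b) %% k) (1) hn) => //; have := mk (a + pi b); lia.
  + move=> h; by apply: (@bnd n k _ (0) (if h == e then 0 else 1) hn); [rewrite muln0|by []|case: eqP].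
  + case=> a b /=.
    apply: (@key' n k _ _ 0 (1 + (k - 1 + pi b) %% k) 1 1) => //; try lia; have := mk (k - 1 + pi b); lia.
  + case=> a b [a'|b'] /=; rewrite /einc /=.
    move=> _; apply: (@key' n k _ _ 0 (1 + (a + pi b) %% k) 1 1) => //; try lia; have := mk (a + pi b); lia.
    move/eqP=> [<-]; apply: (@key1 n k _ _ ((k - 1 + pi b) %% k) ((a + pi b) %% k)) => //.
    rewrite eqn_modDr !modn_small //; have := ltn_ord a; lia.
  + move=> h /=; apply: (@key' n k _ _ (1 + (k - 1 + pi h) %% k) 0 1 (if h == e then 0 else 1)) => //; try lia.
    all: try by rewrite muln0.
    all: try by case: eqP.
  + case=> a1 b1 [a2 b2] [a|b] /=; rewrite /einc /= => ne.
    * move=> /orP [/eqP [ea1] | /eqP //] /orP [/eqP [ea2] | /eqP //]; subst a1 a2.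
      apply: (@key1 n k _ _ ((a + pi b1) %% k) ((a + pi b2) %% k)) => //.
      rewrite eqn_modDl !modn_small //; apply/eqP => /piI eb; subst b2.
      by rewrite eqxx in ne.
    * move=> /eqP [eb1] /eqP [eb2]; subst b1 b2.
      apply: (@key1 n k _ _ ((a1 + pi b) %% k) ((a2 + pi b) %% k)) => //.
      rewrite eqn_modDr !modn_small //; try (have := ltn_ord a1; have := ltn_ord a2; lia).
      apply/eqP => ea; have ea' : a1 = a2 by apply: val_inj.
      by subst a2; rewrite eqxx in ne.
  + case=> a b h /=; rewrite /einc /= => _.
    apply: (@key' n k _ _ (1 + (a + pi b) %% k) 0 1 (if h == e then 0 else 1)) => //; try lia.
    all: try by rewrite muln0.
    all: try by case: eqP.
  + move=> h h' hh /= eqh; case: eqh => eqh; by rewrite eqh eqxx in hh.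
- by rewrite eq_sym (negbTE hee).
- rewrite /= /pi sx /= (_ : k - 1 + 1 = k) ?modnn; lia.
- rewrite /= /pi sx' /= addn0 modn_small; lia.
Qed.
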